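(* Let $\mathfrak{G}$ be a CFSTR in which every species $X_i$ satisfies $\operatorname{TM}(X_i)\le 2$. Then $\mathfrak{G}$ passes the Jacobian Criterion, and consequently, under mass-action kinetics, $\mathfrak{G}$ does not admit multiple steady states (i.e. for no choice of positive rate constants does the mass-action system have two or more distinct positive steady states).
   Context: A chemical reaction network has species $X_1,\dots,X_s$ and a finite set of reactions $y\to y'$ with complexes $y,y'\in\mathbb{Z}_{\ge0}^s$, $y\neq y'$ ($y$ the reactant complex, $y'$ the product complex; $y_i$ is the stoichiometric coefficient of $X_i$ in $y$); every species appears in some complex. A flow reaction is an inflow $0\to X_i$ or an outflow $X_i\to 0$; all other reactions are non-flow. A reaction $y\to y'$ is reversible if $y'\to y$ is also a reaction. A CFSTR is a network containing the outflow $X_i\to0$ for every species $X_i$. Total molecularity: list the non-flow reactions as $y_1\to y_1',\dots,y_l\to y_l'$ (not reversible) and $y_{l+1}\rightleftarrows y_{l+1}',\dots,y_{l+k}\rightleftarrows y_{l+k}'$ (each reversible pair listed once); then $\operatorname{TM}(X_i)=\sum_{j=1}^{l+k}(y_{ji}+y'_{ji})$. Square networks and orientation: for a list of $n$ reactions $y_k\to y_k'$ on $n$ species, the reactant matrix $M$ is the $n\times n$ matrix with $k$-th row $y_k$ and the reaction matrix $R$ has $k$-th row $y_k-y_k'$ (columns indexed by the species); the orientation is $\operatorname{Or}=\operatorname{sign}(\det M\det R)\in\{-1,0,1\}$, and the empty network has orientation $+1$. Jacobian Criterion: a CFSTR $\mathfrak{G}$ with $s$ species passes the Jacobian Criterion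 if for every choice of $s$ distinct reactions of $\mathfrak{G}$, none of which is an inflow reaction, the $s\times s$ reactant and reaction matrices of these reactions (columns indexed by all $s$ species of $\mathfrak G$) give nonnegative orientation. (By results of Craciun and Feinberg this is equivalent to the determinant of the negative Jacobian of the mass-action vector field $f(x)=\sum_k\kappa_k x^{y_k}(y_k'-y_k)$ being positive for all $x\in\mathbb{R}^s_{>0}$ and all rate constants $\kappa>0$, and it implies that the CFSTR has no multiple positive steady states.) *)

(* Defs.v *)
From HB Require Import structures.
From mathcomp Require Import all_boot all_order all_algebra.
Set Implicit Arguments. Unset Strict Implicit. Unset Printing Implicit Defensive.
Import Order.TTheory GRing.Theory Num.Theory.

Definition cplx (s : nat) := {ffun 'I_s -> nat}.
(* A reaction y -> y' is the pair (y, y'). *)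
Definition reaction (s : nat) := (cplx s * cplx s)%type.
(* A network on s species: a finite set of reactions, as a duplicate-free list. *)
Definition network (s : nat) := seq (reaction s).

Definition zero_cplx (s : nat) : cplx s := [ffun => 0%N].
Definition unit_cplx (s : nat) (i : 'I_s) : cplx s := [ffun j => nat_of_bool (j == i)].

Definition rev_reaction (s : nat) (r : reaction s) : reaction s := (r.2, r.1).

Definition is_inflow (s : nat) (r : reaction s) : bool :=
  (r.1 == zero_cplx s) && [exists i, r.2 == unit_cplx i].
Definition is_outflow (s : nat) (r : reaction s) : bool :=
  [exists i, r.1 == unit_cplx i] && (r.2 == zero_cplx s).
Definition is_flow (s : nat) (r : reaction s) : bool := is_inflow r || is_outflow r.

Definition wf_network (s : nat) (G : network s) : Prop :=
  [/\ uniq G,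
      (forall r, r \in G -> r.1 != r.2) &
      (forall i : 'I_s, exists2 r, r \in G & (0 < r.1 i)%N || (0 < r.2 i)%N)].

Definition is_CFSTR (s : nat) (G : network s) : Prop :=
  wf_network G /\ forall i : 'I_s, (unit_cplx i, zero_cplx s) \in G.

(* Total molecularity: sum over non-flow reactions, each reversible pair counted
   once (the representative being the one occurring first in the list G). *)
Definition TM (s : nat) (G : network s) (i : 'I_s) : nat :=
  \sum_(r <- G | ~~ is_flow r &&
                 ((rev_reaction r \notin G) || (index r G < index (rev_reaction r) G))%N)
     (r.1 i + r.2 i)%N.

Definition reactant_mx (n : nat) (k : 'I_n -> reaction n) : 'M[int]_n :=
  \matrix_(a, i) Posz ((k a).1 i).
Definition reaction_mx (n : nat) (k : 'I_n -> reaction n) : 'M[int]_n :=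
  \matrix_(a, i) (Posz ((k a).1 i) - Posz ((k a).2 i))%R.

Definition orientation (n : nat) (k : 'I_n -> reaction n) : int :=
  sgz (\det (reactant_mx k) * \det (reaction_mx k))%R.

Definition passes_Jacobian_criterion (s : nat) (G : network s) : Prop :=
  forall k : 'I_s -> reaction s, injective k ->
    (forall a, k a \in G) -> (forall a, ~~ is_inflow (k a)) ->
    (0 <= orientation k)%R.

Definition monomial (R : ringType) (s : nat) (x : 'I_s -> R) (y : cplx s) : R :=
  (\prod_(j < s) x j ^+ y j)%R.

Definition mass_action (R : ringType) (s : nat) (G : network s)
    (kappa : reaction s -> R) (x : 'I_s -> R) (i : 'I_s) : R :=
  (\sum_(r <- G) kappa r * monomial x r.1 * ((r.2 i)%:R - (r.1 i)%:R))%R.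

Definition admits_multiple_steady_states (R : realFieldType) (s : nat) (G : network s) : Prop :=
  exists kappa : reaction s -> R,
    (forall r, r \in G -> (0 < kappa r)%R) /\
    exists x1 x2 : 'I_s -> R,
      [/\ (forall i, (0 < x1 i)%R), (forall i, (0 < x2 i)%R),
          (forall i, mass_action G kappa x1 i = 0%R),
          (forall i, mass_action G kappa x2 i = 0%R) & x1 <> x2].

(* Main.v *)
Require Import Defs.
From HB Require Import structures.
From mathcomp Require Import all_boot all_order all_algebra.
From mathcomp Require Import all_fingroup.
From mathcomp Require Import ring lra zify.
From Stdlib Require Import Classical FunctionalExtensionality.
Set Implicit Arguments. Unset Strict Implicit. Unset Printing Implicit Defensive.
Import Order.TTheory GRing.Theory Num.Theory.

Local Open Scope ring_scope.

Definition dlt n (i j : 'I_n) : int := (i == j)%:R.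
Definition colform n (M : 'M[int]_n) (j : 'I_n) :=
  exists b (t : int), `|t| <= 1 /\ forall i, M i j = dlt i j + t * dlt i b.
Definition rowform n (M : 'M[int]_n) (j : 'I_n) := forall m, M j m = dlt j m.
Definition good n (M : 'M[int]_n) := forall j, colform M j \/ rowform M j.
Definition minor n (M : 'M[int]_n.+1) (j : 'I_n.+1) : 'M[int]_n := row' j (col' j M).

Lemma minorE n (M : 'M[int]_n.+1) j i k : minor M j i k = M (lift j i) (lift j k).
Proof. by rewrite !mxE. Qed.

Lemma dlt_lift n (j : 'I_n.+1) i k : dlt (lift j i) (lift j k) = dlt i k.
Proof. by rewrite /dlt (inj_eq lift_inj). Qed.
Lemma dlt_lift_j n (j : 'I_n.+1) i : dlt (lift j i) j = 0.
Proof. by rewrite /dlt eq_sym (negbTE (neq_lift _ _)). Qed.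
Lemma dlt_j_lift n (j : 'I_n.+1) i : dlt j (lift j i) = 0.
Proof. by rewrite /dlt (negbTE (neq_lift _ _)). Qed.
Lemma dltxx n (i : 'I_n) : dlt i i = 1.
Proof. by rewrite /dlt eqxx. Qed.
Lemma dltN n (i j : 'I_n) : i != j -> dlt i j = 0.
Proof. by move=> h; rewrite /dlt (negbTE h). Qed.

Lemma colform_minor n (M : 'M[int]_n.+1) j k :
  colform M (lift j k) -> colform (minor M j) k.
Proof.
case=> b [t [ht hM]].
case: (unliftP j b) hM => [b' ->|->] hM.
- by exists b', t; split=> // i; rewrite minorE hM !dlt_lift.
- exists k, 0; split; first by rewrite normr0.
  move=> i; rewrite minorE hM dlt_lift dlt_lift_j; ring.
Qed.

Lemma rowform_minor n (M : 'M[int]_n.+1) j k :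
  rowform M (lift j k) -> rowform (minor M j) k.
Proof. by move=> h m; rewrite minorE h dlt_lift. Qed.

Lemma good_minor n (M : 'M[int]_n.+1) j : good M -> good (minor M j).
Proof.
move=> h k; case: (h (lift j k)) => H.
- by left; apply: colform_minor.
- by right; apply: rowform_minor.
Qed.

Lemma cofactor_diag n (M : 'M[int]_n.+1) j : cofactor M j j = \det (minor M j).
Proof.
by rewrite /cofactor -signr_odd addnn odd_double expr0 mul1r.
Qed.

Lemma det_rowop n (A : 'M[int]_n) (b j : 'I_n) (c : int) : b != j ->
  \det (\matrix_(i, m) (if i == b then A b m + c * A j m else A i m)) = \det A.
Proof.
move=> hbj.
set C := \matrix_(i, m) (if i == b then A j m else A i m).
rewrite (@determinant_multilinear _ _ _ A C b 1 c).
- rewrite (@determinant_alternate _ _ C b j) ?mulr0 ?addr0 ?mul1r //.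
  by move=> m; rewrite !mxE eqxx eq_sym (negbTE hbj).
- by apply/rowP => m; rewrite !mxE eqxx mul1r.
- by apply/matrixP => i m; rewrite !mxE eq_sym (negbTE (neq_lift _ _)).
- apply/matrixP => i m; rewrite !mxE.
  have -> : (lift b i == b) = false by rewrite eq_sym (negbTE (neq_lift _ _)).
  by [].
Qed.

Lemma detpos n (M : 'M[int]_n) : good M -> 0 <= \det M.
Proof.
elim: n M => [|n IH] M hM; first by rewrite det_mx00.
case: (classic (exists j, rowform M j)) => [[j hj]|hno].
  rewrite (expand_det_row _ j) (bigD1 j) //= big1 ?addr0.
    by rewrite hj dltxx mul1r cofactor_diag; apply/IH/good_minor.
  by move=> m hm; rewrite hj dltN ?mul0r // eq_sym.
have hc : forall j, colform M j.
  by move=> j; case: (hM j) => // hr; exfalso; apply: hno; exists j.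
pose j := (ord0 : 'I_n.+1).
case: (hc j) => b [t [ht hcol]].
have t1 : -1 <= t <= 1 by rewrite -ler_norml.
case: (eqVneq b j) => [eb|nb].
  subst b.
  rewrite (expand_det_col _ j) (bigD1 j) //= big1 ?addr0.
    rewrite hcol dltxx cofactor_diag mulr1.
    apply: mulr_ge0; last by apply/IH/good_minor.
    by move: t1 => /andP[t1 _]; lra.
  by move=> i hi; rewrite hcol dltN ?mulr0 ?addr0 ?mul0r.
rewrite -(@det_rowop _ M b j (- t)) //.
set N := \matrix_(i, m) _.
have hNj : forall i, N i j = dlt i j.
  move=> i; rewrite !mxE; case: (eqVneq i b) => [->|hib].
    have nb' : j != b by rewrite eq_sym.
    rewrite !hcol !dltxx (dltN nb) (dltN nb'). ring.
  by rewrite hcol (dltN hib) mulr0 addr0.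
rewrite (expand_det_col _ j) (bigD1 j) //= big1 ?addr0.
  rewrite hNj dltxx mul1r cofactor_diag; apply: IH.
  move=> k; left.
  case: (hc (lift j k)) => bk [tk [htk hk]].
  case: (unliftP j b) => [b' eb'|eb']; last by rewrite eb' eqxx in nb.
  case: (unliftP j bk) => [bk' ebk|ebk].
  - exists bk', tk; split=> // i.
    rewrite minorE !mxE eb' (inj_eq lift_inj).
    case: (eqVneq i b') => [->|hib]; rewrite ?eqxx ?(negbTE hib) !hk ebk !dlt_lift ?dlt_j_lift; ring.
  - exists b', (- t * tk); split.
      by rewrite normrM normrN; apply: mulr_ile1.
    move=> i; rewrite minorE !mxE eb' (inj_eq lift_inj).
    case: (eqVneq i b') => [->|hib]; rewrite ?eqxx ?(negbTE hib) !hk ebk.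
      by rewrite !dlt_lift dlt_lift_j dlt_j_lift !dltxx; ring.
    by rewrite dlt_lift dlt_lift_j (dltN hib); ring.
by move=> i hi; rewrite hNj dltN ?mul0r.
Qed.

Local Close Scope ring_scope.

Lemma sum_sub (T : eqType) (s1 G : seq T) (P : pred T) (F : T -> nat) :
  uniq s1 -> uniq G -> {subset s1 <= [seq r <- G | P r]} ->
  (\sum_(r <- s1) F r <= \sum_(r <- G | P r) F r)%N.
Proof.
move=> u1 uG sub.
rewrite -(big_filter G) [X in (_ <= X)%N](bigID (mem s1)) /=.
apply: leq_trans (leq_addr _ _); apply: eq_leq.
rewrite -[X in _ = X]big_filter.
apply: perm_big; apply: uniq_perm => //.
  by apply: filter_uniq; apply: filter_uniq.
by move=> x; rewrite mem_filter /=; case: (boolP (x \in s1)) => // /sub ->.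
Qed.

Lemma is_flow_rev s (r : reaction s) : is_flow (rev_reaction r) = is_flow r.
Proof.
rewrite /is_flow /is_inflow /is_outflow /= orbC.
by congr orb; rewrite andbC.
Qed.

Lemma rev_neq s (G : network s) r : wf_network G -> r \in G -> rev_reaction r != r.
Proof.
case=> _ h _ rG; apply/negP => /eqP e.
by move: (h r rG); rewrite -{1}e /= eqxx.
Qed.

Lemma budget s (G : network s) (k : 'I_s -> reaction s) (i : 'I_s) :
  wf_network G -> injective k -> (forall a, k a \in G) ->
  (forall a a', k a' != rev_reaction (k a)) ->
  (\sum_(a | ~~ is_flow (k a)) ((k a).1 i + (k a).2 i) <= TM G i)%N.
Proof.
move=> wf kinj kG npair.
have uG : uniq G by case: wf.
pose rep (r : reaction s) :=
  if (rev_reaction r \notin G) || (index r G < index (rev_reaction r) G)%N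
  then r else rev_reaction r.
pose F (r : reaction s) := (r.1 i + r.2 i)%N.
pose P (r : reaction s) := ~~ is_flow r &&
  ((rev_reaction r \notin G) || (index r G < index (rev_reaction r) G)%N).
have Frep : forall r, F (rep r) = F r.
  by move=> r; rewrite /rep; case: ifP => // _; rewrite /F /= addnC.
have repP : forall r, r \in G -> ~~ is_flow r -> rep r \in [seq x <- G | P x].
  move=> r rG nf; rewrite mem_filter /rep.
  case: ifP => h.
    by rewrite /P nf h rG.
  move: h => /negbT; rewrite negb_or negbK -leqNgt => /andP[rrG le].
  rewrite rrG /P is_flow_rev nf /=.
  have -> : rev_reaction (rev_reaction r) = r by case: r {rG nf le rrG}.
  rewrite rG /= ltn_neqAle le andbT.
  rewrite andbT; apply/negP => /eqP e.
  have : nth r G (index (rev_reaction r) G) = nth r G (index r G) by rewrite e.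
  by rewrite !nth_index // => ee; move: (rev_neq wf rG); rewrite ee eqxx.
pose nf := fun a => ~~ is_flow (k a).
pose s1 := [seq rep (k a) | a <- [seq a <- index_enum 'I_s | nf a]].
have -> : (\sum_(a | ~~ is_flow (k a)) ((k a).1 i + (k a).2 i) = \sum_(r <- s1) F r)%N.
  rewrite big_map big_filter; apply: eq_bigr => a _; by rewrite Frep.
apply: sum_sub => //.
  rewrite map_inj_in_uniq; first by apply: filter_uniq; apply: index_enum_uniq.
  move=> a b _ _; rewrite /rep.
  case: ifP => _; case: ifP => _ e.
  - exact: kinj.
  - by move: (npair b a); rewrite e eqxx.
  - by move: (npair a b); rewrite -e eqxx.
  - apply: kinj; move: e; case: (k a) => ??; case: (k b) => ?? /= [-> ->] //.
move=> r /mapP [a ha ->]; apply: repP; first exact: kG.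
by move: ha; rewrite mem_filter => /andP[].
Qed.

Local Close Scope ring_scope.

Lemma sum1 (I : finType) (P : pred I) (F : I -> nat) a :
  P a -> (F a <= \sum_(x | P x) F x)%N.
Proof. by move=> Pa; rewrite (bigD1 a) //= leq_addr. Qed.

Lemma sum2 (I : finType) (P : pred I) (F : I -> nat) a b :
  P a -> P b -> a != b -> (F a + F b <= \sum_(x | P x) F x)%N.
Proof.
move=> Pa Pb ab; rewrite (bigD1 a) //= (bigD1 b) /=; last by rewrite Pb eq_sym.
by rewrite addnA leq_addr.
Qed.

Lemma sum3 (I : finType) (P : pred I) (F : I -> nat) a b c :
  P a -> P b -> P c -> a != b -> a != c -> b != c ->
  (F a + F b + F c <= \sum_(x | P x) F x)%N.
Proof.
move=> Pa Pb Pc ab ac bc; rewrite (bigD1 a) //= (bigD1 b) /=; last by rewrite Pb eq_sym.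
rewrite (bigD1 c) /=; last by rewrite Pc eq_sym ac eq_sym bc.
by rewrite !addnA leq_addr.
Qed.

Local Open Scope ring_scope.

Lemma det_negrow n (A : 'M[int]_n) a a' : a != a' ->
  (forall m, A a' m = - A a m) -> \det A = 0.
Proof.
move=> naa h.
set B := \matrix_(i, m) (if i == a' then A a m else A i m).
rewrite (@determinant_multilinear _ _ A B A a' (-1) 0).
- rewrite (@determinant_alternate _ _ B a a') //; first by rewrite mulr0 mul0r addr0.
  by move=> m; rewrite !mxE eqxx (negbTE naa).
- by apply/rowP => m; rewrite !mxE eqxx h; ring.
- by apply/matrixP => i m; rewrite !mxE eq_sym (negbTE (neq_lift _ _)).
- by [].
Qed.

Lemma natb_int (b : bool) : Posz (nat_of_bool b) = b%:R.
Proof. by case: b. Qed.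

Lemma outflowP s (r : reaction s) :
  is_outflow r -> exists l, r = (unit_cplx l, zero_cplx s).
Proof.
case/andP => /existsP [l /eqP e1] /eqP e2; exists l.
by case: r e1 e2 => ?? /= -> ->.
Qed.

Lemma core s (G : network s) (k : 'I_s -> reaction s) (sg : 'S_s) :
  is_CFSTR G -> (forall i, (TM G i <= 2)%N) -> injective k -> (forall a, k a \in G) ->
  (forall a, ~~ is_inflow (k a)) -> (forall i, (0 < (k (sg i)).1 i)%N) ->
  0 <= (-1) ^+ sg * \det (reaction_mx k).
Proof.
move=> [wf outs] TM2 kinj kG ninf pos.
case: (classic (exists a a', k a' = rev_reaction (k a))) => [[a [a' e]]|np].
  have naa : a != a'.
    apply/negP => /eqP E; subst a'.
    by move: (rev_neq wf (kG a)); rewrite -e eqxx.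
  rewrite (det_negrow naa) ?mulr0 // => m.
  by rewrite !mxE e /=; ring.
have npair : forall a a', k a' != rev_reaction (k a).
  by move=> a a'; apply/eqP => E; apply: np; exists a, a'.
have -> : (-1) ^+ sg * \det (reaction_mx k) = \det (row_perm sg (reaction_mx k)).
  by rewrite row_permE det_mulmx det_perm.
have Rk : forall a i, reaction_mx k a i = Posz ((k a).1 i) - Posz ((k a).2 i).
  by move=> a i; rewrite mxE.
apply: detpos => i.
pose a := sg i.
have hpos := pos i.
case: (boolP (is_outflow (k a))) => [hout|hnout].
  right => m; rewrite mxE Rk.
  have [l el] := outflowP hout.
  rewrite -/a el /= ffunE in hpos *.
  have eil : i = l by move: hpos; case: eqP.
  subst l; rewrite !ffunE natb_int subr0 /dlt eq_sym //.
left.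
have nfa : ~~ is_flow (k a) by rewrite /is_flow negb_or ninf.
pose Fv a' := ((k a').1 i + (k a').2 i)%N.
have hb : (\sum_(a' | ~~ is_flow (k a')) Fv a' <= 2)%N.
  exact: leq_trans (budget i wf kinj kG npair) (TM2 i).
have hz : forall a', a' != a -> reaction_mx k a' i != 0 ->
    ~~ is_flow (k a') /\ (1 <= Fv a')%N.
  move=> a' na' hne.
  case: (boolP (is_outflow (k a'))) => [ho|hno].
    exfalso; have [l el] := outflowP ho.
    move: hne; rewrite Rk el /= !ffunE.
    case: (eqVneq i l) => [eil|] //; subst l => _.
    have := pos (sg^-1 a')%g; rewrite permKV el /= ffunE.
    case: eqP => // E _; move: na'; rewrite /a -E permKV eqxx //.
  split; first by rewrite /is_flow negb_or ninf.
  move: hne; rewrite Rk /Fv; lia.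
have Fa1 : (1 <= Fv a)%N by rewrite /Fv /a; lia.
have Fa2 : (Fv a <= 2)%N by apply: leq_trans hb; apply: (@sum1 _ _ Fv).
case: (classic (exists a1, a1 != a /\ reaction_mx k a1 i != 0)) => [[a1 [n1 h1]]|nex].
  have [nf1 F1] := hz a1 n1 h1.
  have two : (Fv a + Fv a1 <= 2)%N.
    apply: leq_trans hb; apply: (@sum2 _ _ Fv) => //; by rewrite eq_sym.
  exists (sg^-1 a1)%g, (reaction_mx k a1 i); split.
    rewrite ler_norml Rk; move: two F1 Fa1; rewrite /Fv => ???; apply/andP; split; lia.
  have nb : (sg^-1 a1)%g != i.
    by apply/eqP => E; move: n1; rewrite /a -E permKV eqxx.
  move=> j; rewrite mxE.
  case: (eqVneq j i) => [->|nji].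
    have nb' : i != (sg^-1 a1)%g by rewrite eq_sym.
    rewrite dltxx (dltN nb') mulr0 Rk; move: two Fa1 hpos F1; rewrite /Fv /a; lia.
  case: (eqVneq j (sg^-1 a1)%g) => [->|njb].
    by rewrite permKV dltxx (dltN nb); ring.
  rewrite (dltN nji) (dltN njb) mulr0 addr0.
  have h2 : sg j != a by apply/eqP => /perm_inj E; rewrite E eqxx in nji.
  have h3 : sg j != a1 by apply/eqP => E; rewrite -E permK eqxx in njb.
  apply/eqP; apply/negP => /negP hne.
  have [nfj Fj] := hz _ h2 hne.
  have := @sum3 _ (fun a' => ~~ is_flow (k a')) Fv a a1 (sg j) nfa nf1 nfj.
  have h2' : a != sg j by rewrite eq_sym.
  have h3' : a1 != sg j by rewrite eq_sym.
  have n1' : a != a1 by rewrite eq_sym.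
  move=> /(_ n1' h2' h3') h.
  move: (leq_trans h hb) Fa1 F1 Fj; lia.
exists i, (reaction_mx k a i - 1); split.
  rewrite ler_norml Rk; move: Fa1 Fa2 hpos; rewrite /Fv /a => ???; apply/andP; split; lia.
move=> j; rewrite mxE.
case: (eqVneq j i) => [->|nji].
  by rewrite dltxx; ring.
rewrite (dltN nji) mulr0 addr0.
have h2 : sg j != a by apply/eqP => /perm_inj E; rewrite E eqxx in nji.
case: (eqVneq (reaction_mx k (sg j) i) 0) => // hne.
by exfalso; apply: nex; exists (sg j); split.
Qed.

Local Close Scope ring_scope.

Local Open Scope ring_scope.

Lemma jacobian s (G : network s) :
  is_CFSTR G -> (forall i, (TM G i <= 2)%N) -> passes_Jacobian_criterion G.
Proof.
move=> hC hTM k kinj kG ninf.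
rewrite /orientation sgz_ge0 -(det_tr (reactant_mx k)) [X in (X * _)]/determinant mulr_suml.
apply: sumr_ge0 => sg _.
rewrite mulrAC.
case: (classic (forall i, (0 < (k (sg i)).1 i)%N)) => [hp|hn].
  apply: mulr_ge0; first exact: (core hC hTM kinj kG ninf hp).
  by apply: prodr_ge0 => i _; rewrite !mxE.
have [i hi] := not_all_ex_not _ _ hn.
rewrite (bigD1 i) //= !mxE.
have -> : (k (sg i)).1 i = 0%N by move: hi; case: ((k (sg i)).1 i).
by rewrite mul0r mulr0.
Qed.

Local Close Scope ring_scope.

Local Open Scope ring_scope.

Definition hh (R : comRingType) (a b : R) (n : nat) :=
  \sum_(q < n) a ^+ (n.-1 - q) * b ^+ q.

Definition VV (R : comRingType) s (x1 x2 : 'I_s -> R) (y : cplx s) (j : 'I_s) :=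
  \prod_(l < s) (if (l < j)%N then x1 l ^+ y l
                 else if l == j then hh (x1 l) (x2 l) (y l) else x2 l ^+ y l).

Lemma tele (R : comRingType) s (x1 x2 : 'I_s -> R) (y : cplx s) :
  monomial x1 y - monomial x2 y = \sum_(j < s) VV x1 x2 y j * (x1 j - x2 j).
Proof.
pose P (n : nat) := \prod_(l < s) (if (l < n)%N then x1 l ^+ y l else x2 l ^+ y l).
have P0 : P 0%N = monomial x2 y by apply: eq_bigr.
have Ps : P s = monomial x1 y by apply: eq_bigr => l _; rewrite ltn_ord.
have step : forall j : 'I_s, P j.+1 - P j = VV x1 x2 y j * (x1 j - x2 j).
  move=> j; rewrite /P /VV (bigD1 j) //= [X in _ - X](bigD1 j) //= [in RHS](bigD1 j) //=.
  rewrite ltnS leqnn ltnn eqxx.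
  set Q := \prod_(l < s | l != j) (if (l < j)%N then x1 l ^+ y l else x2 l ^+ y l).
  have -> : \prod_(l < s | l != j) (if (l < j.+1)%N then x1 l ^+ y l else x2 l ^+ y l) = Q.
    apply: eq_bigr => l hl; rewrite ltnS leq_eqVlt.
    by have -> : (nat_of_ord l == nat_of_ord j) = false by apply/negbTE.
  have -> : \prod_(l < s | l != j) (if (l < j)%N then x1 l ^+ y l
             else if l == j then hh (x1 l) (x2 l) (y l) else x2 l ^+ y l) = Q.
    by apply: eq_bigr => l hl; rewrite (negbTE hl).
  rewrite -mulrBl subrXX /hh; ring.
rewrite -Ps -P0 -(telescope_sumr _ (leq0n s)) big_mkord.
by apply: eq_bigr => j _; rewrite step.
Qed.

Lemma hh_ge0 (R : numDomainType) (a b : R) n : 0 < a -> 0 < b -> 0 <= hh a b n.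
Proof.
move=> ha hb; apply: sumr_ge0 => q _; apply: mulr_ge0; apply: exprn_ge0; exact: ltW.
Qed.

Lemma hh_gt0 (R : realFieldType) (a b : R) n : 0 < a -> 0 < b -> (0 < n)%N -> 0 < hh a b n.
Proof.
move=> ha hb; case: n => // n _; rewrite /hh big_ord_recl.
have h1 : 0 < a ^+ (n.+1.-1 - 0) * b ^+ 0 by apply: mulr_gt0; apply: exprn_gt0.
have h2 : 0 <= \sum_(i < n) a ^+ (n.+1.-1 - bump 0 i) * b ^+ bump 0 i.
  by apply: sumr_ge0 => q _; apply: mulr_ge0; apply: exprn_ge0; exact: ltW.
lra.
Qed.

Lemma VV_ge0 (R : realFieldType) s (x1 x2 : 'I_s -> R) y j :
  (forall l, 0 < x1 l) -> (forall l, 0 < x2 l) -> 0 <= VV x1 x2 y j.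
Proof.
move=> p1 p2; apply: prodr_ge0 => l _.
case: ifP => _; first by apply: exprn_ge0; exact: ltW.
case: ifP => _; first exact: hh_ge0.
by apply: exprn_ge0; exact: ltW.
Qed.

Lemma VV_gt0 (R : realFieldType) s (x1 x2 : 'I_s -> R) (y : cplx s) j :
  (forall l, 0 < x1 l) -> (forall l, 0 < x2 l) -> (0 < y j)%N -> 0 < VV x1 x2 y j.
Proof.
move=> p1 p2 hy; apply: prodr_gt0 => l _.
case: ifP => _; first exact: exprn_gt0.
case: ifP => [/eqP ->|_]; first exact: hh_gt0.
exact: exprn_gt0.
Qed.

Lemma VV_0 (R : comRingType) s (x1 x2 : 'I_s -> R) (y : cplx s) j :
  y j = 0%N -> VV x1 x2 y j = 0.
Proof.
by move=> hy; rewrite /VV (bigD1 j) //= ltnn eqxx hy /hh big_ord0 mul0r.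
Qed.

Lemma det_sum_rows (R : comRingType) n m (C : 'I_n -> 'I_m -> R) (U : 'I_m -> 'I_n -> R) :
  \det (\matrix_(j, i) \sum_(p < m) C j p * U p i) =
  \sum_(f : {ffun 'I_n -> 'I_m}) (\prod_j C j (f j)) * \det (\matrix_(j, i) U (f j) i).
Proof.
rewrite /determinant.
transitivity (\sum_(sg : 'S_n) \sum_(f : {ffun 'I_n -> 'I_m})
   (-1) ^+ sg * ((\prod_j C j (f j)) * \prod_j U (f j) (sg j))).
  apply: eq_bigr => sg _.
  rewrite (eq_bigr (fun j => \sum_(p < m) C j p * U p (sg j))); last by move=> j _; rewrite mxE.
  rewrite bigA_distr_bigA mulr_sumr; apply: eq_bigr => f _.
  by rewrite big_split.
rewrite exchange_big; apply: eq_bigr => f _.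
rewrite mulr_sumr; apply: eq_bigr => sg _.
have -> : \prod_i (\matrix_(j, i0) U (f j) i0) i (sg i) = \prod_i U (f i) (sg i).
  by apply: eq_bigr => i _; rewrite mxE.
by rewrite mulrCA.
Qed.

Local Close Scope ring_scope.

Local Open Scope ring_scope.

Lemma noMSS (R : rcfType) s (G : network s) :
  is_CFSTR G -> (forall i, (TM G i <= 2)%N) -> ~ admits_multiple_steady_states R G.
Proof.
move=> hC hTM [kappa [kpos [x1 [x2 [p1 p2 f1 f2 neq]]]]].
apply: neq; apply: functional_extensionality => j0.
have [wf outs] := hC.
have uG : uniq G by case: wf.
pose m := size G.
pose x0 : reaction s := (zero_cplx s, zero_cplx s).
pose rr (p : 'I_m) := nth x0 G p.
have rrG : forall p, rr p \in G by move=> p; apply: mem_nth.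
have kp : forall p, 0 < kappa (rr p) := fun p => kpos _ (rrG p).
have mass : forall x i, mass_action G kappa x i = \sum_(p < m) kappa (rr p) *
    monomial x (rr p).1 * (((rr p).2 i)%:R - ((rr p).1 i)%:R).
  by move=> x i; rewrite /mass_action (big_nth x0) big_mkord.
pose U (p : 'I_m) (i : 'I_s) : R := ((rr p).1 i)%:R - ((rr p).2 i)%:R.
pose Vp (p : 'I_m) (j : 'I_s) := VV x1 x2 (rr p).1 j.
pose L := \matrix_(i, j) \sum_(p < m) kappa (rr p) * Vp p j * U p i.
pose dv := \col_(j < s) (x1 j - x2 j).
have eq0 : L *m dv = 0.
  apply/matrixP => i z; rewrite !mxE.
  transitivity (- (mass_action G kappa x1 i - mass_action G kappa x2 i));
    last by rewrite f1 f2 subrr oppr0.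
  rewrite !mass -sumrB -sumrN.
  under eq_bigr => j _ do rewrite !mxE mulr_suml.
  rewrite exchange_big /=; apply: eq_bigr => p _.
  transitivity (kappa (rr p) * U p i * \sum_(j < s) Vp p j * (x1 j - x2 j)).
    by rewrite mulr_sumr; apply: eq_bigr => j _; rewrite /Vp; ring.
  rewrite /Vp -tele /U; ring.
have Lpos : 0 < \det L.
  rewrite -det_tr.
  have -> : L^T = \matrix_(j, i) \sum_(p < m) (kappa (rr p) * Vp p j) * U p i.
    by apply/matrixP => j i; rewrite !mxE.
  rewrite det_sum_rows.
  have idx : forall j : 'I_s, (index (unit_cplx j, zero_cplx s) G < m)%N.
    by move=> j; rewrite index_mem.
  pose f0 : {ffun 'I_s -> 'I_m} := [ffun j => Ordinal (idx j)].
  have rr0 : forall j, rr (f0 j) = (unit_cplx j, zero_cplx s).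
    by move=> j; rewrite /rr ffunE /= nth_index.
  rewrite (bigD1 f0) //=.
  have A : 0 < (\prod_j (kappa (rr (f0 j)) * Vp (f0 j) j)) *
             \det (\matrix_(j, i) U (f0 j) i).
    have -> : \matrix_(j, i) U (f0 j) i = 1%:M.
      apply/matrixP => j i; rewrite !mxE /U rr0 /= !ffunE subr0 eq_sym.
      by case: (i == j).
    rewrite det1 mulr1; apply: prodr_gt0 => j _; apply: mulr_gt0 => //.
    by apply: VV_gt0 => //; rewrite rr0 /= ffunE eqxx.
  have B : 0 <= \sum_(f | f != f0) (\prod_j (kappa (rr (f j)) * Vp (f j) j)) *
             \det (\matrix_(j, i) U (f j) i).
    apply: sumr_ge0 => f _.
    case: (classic (forall j, (0 < (rr (f j)).1 j)%N)) => [hp|hn]; last first.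
      have [j hj] := not_all_ex_not _ _ hn.
      rewrite (bigD1 j) //= /Vp VV_0 ?mulr0 ?mul0r //.
      by move: hj; case: ((rr (f j)).1 j).
    apply: mulr_ge0.
      by apply: prodr_ge0 => j _; apply: mulr_ge0; [exact: ltW | exact: VV_ge0].
    case: (boolP (injectiveb f)) => [/injectiveP finj | /injectivePn [a [b nab fab]]];
      last by rewrite (determinant_alternate nab) // => i; rewrite !mxE fab.
    pose k := fun a => rr (f a).
    have -> : \matrix_(j, i) U (f j) i = map_mx (intr : int -> R) (reaction_mx k).
      by apply/matrixP => j i; rewrite !mxE /U intrB.
    rewrite det_map_mx ler0z.
    have := @core s G k 1%g hC hTM.
    rewrite odd_perm1 expr0 mul1r; apply.
    - move=> a b; rewrite /k /rr => /eqP; rewrite nth_uniq // => /eqP /val_inj.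
      exact: finj.
    - by move=> a; apply: rrG.
    - move=> a; rewrite /is_inflow negb_and; apply/orP; left.
      have := hp a; rewrite /k; apply: contraL => /eqP ->.
      by rewrite ffunE.
    - by move=> i; rewrite /k perm1; apply: hp.
  lra.
have unitL : L \in unitmx by rewrite unitmxE unitfE lt0r_neq0.
have dv0 : dv = 0 by rewrite -(mulKmx unitL dv) eq0 mulmx0.
have := congr1 (fun M : 'cV_s => M j0 0) dv0; rewrite !mxE => /eqP.
by rewrite subr_eq0 => /eqP.
Qed.

Local Close Scope ring_scope.

Theorem mainTheorem1 (R : rcfType) (s : nat) (G : network s) :
  is_CFSTR G -> (forall i : 'I_s, (TM G i <= 2)%N) ->
  passes_Jacobian_criterion G /\ ~ admits_multiple_steady_states R G.
Proof.
move=> hC hTM; split; [exact: jacobian | exact: noMSS].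
Qed.
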